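(* Let $m\geq 1$, $n\geq 3$ and $p\geq 2$ be integers, and let $i,j\in V$. There exists a walk of length $pn-1$ from $i$ to $j$ in $D^m_n$ if and only if there exists a walk of length $n-1$ from $i$ to $j$ in $D^m_n$. In such cases, the number of walks of length $pn-1$ from $i$ to $j$ in $D^m_n$ is exactly $m^{p-1}$.
   Context: For integers $m\geq 1$, $n\geq 3$, the oriented Dutch windmill graph $D^m_n$ is the directed graph with vertex set $V=\{1,2,\ldots,m(n-1)+1\}$ whose directed edges $(a,b)$ are exactly: $(1,(k-1)(n-1)+2)$ for $k\in\{1,\ldots,m\}$; $((k-1)(n-1)+i,(k-1)(n-1)+i+1)$ for $k\in\{1,\ldots,m\}$ and $i\in\{2,\ldots,n-1\}$; and $((k-1)(n-1)+n,1)$ for $k\in\{1,\ldots,m\}$. A walk is a sequence of vertices $\langle v_1,\ldots,v_r\rangle$ in which each $(v_t,v_{t+1})$ is an edge; its length is $r-1$; walks are distinct when they are distinct sequences. *)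

(* Defs.v *)
(* Oriented Dutch windmill graph D^m_n on vertices 1..m(n-1)+1. *)
From mathcomp Require Import all_boot.
Set Implicit Arguments. Unset Strict Implicit. Unset Printing Implicit Defensive.

Definition inV (m n v : nat) : bool := (1 <= v) && (v <= m * (n - 1) + 1).

(* directed edges; the paper's blade index k in {1..m} is k.+1 for k : 'I_m,
   so (k-1) of the paper is k here *)
Definition dw_edge (m n : nat) (a b : nat) : bool :=
  [|| [exists k : 'I_m, (a == 1) && (b == k * (n - 1) + 2)],
      [exists k : 'I_m, exists i : 'I_n,
          [&& 2 <= i, i <= n - 1, a == k * (n - 1) + i & b == k * (n - 1) + i + 1]]
    | [exists k : 'I_m, (a == k * (n - 1) + n) && (b == 1)]].

Definition is_walk (m n L i j : nat) (s : seq nat) : bool :=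
  match s with
  | [::] => false
  | x :: t => [&& size s == L.+1, all (inV m n) s, x == i,
                 last x t == j & path (dw_edge m n) x t]
  end.

(* number of distinct walks of length L from i to j; walks are sequences of
   vertices, enumerated as tuples over 'I_(m(n-1)+2) (which contains V) *)
Definition nwalks (m n L i j : nat) : nat :=
  #|[set t : (L.+1).-tuple 'I_(m * (n - 1) + 2) | is_walk m n L i j (map val t)]|.

(* Main.v *)
Require Import Defs.
From mathcomp Require Import all_boot.
From mathcomp Require Import all_boot zify.
Set Warnings "-notation-overridden".
Lemma big_tuple_split (T : finType) L (F : (L.+1).-tuple T -> nat) :
  \sum_(t : (L.+1).-tuple T) F t = \sum_(x : T) \sum_(t : L.-tuple T) F [tuple of x :: t].
Proof.
rewrite pair_big /=.
rewrite (reindex (fun p : T * L.-tuple T => [tuple of p.1 :: p.2])) //=.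
exists (fun t : (L.+1).-tuple T => (thead t, [tuple of behead t])).
  by move=> [x t] _ /=; rewrite theadE; congr pair; apply: val_inj.
by move=> t _ /=; rewrite [RHS]tuple_eta.
Qed.
Lemma big_tuple0 (T : finType) (F : 0.-tuple T -> nat) :
  \sum_(t : 0.-tuple T) F t = F [tuple].
Proof.
rewrite (big_pred1 [tuple]) // => t; apply/esym/eqP; apply: val_inj; by case: t => -[].
Qed.

Definition Wc m n j L i := \sum_(t : L.-tuple 'I_(m*(n-1)+2)) is_walk m n L i j (i :: map val t).
Definition rr n a := (a - 2) %% (n - 1).
Definition succ n a := if rr n a == n - 2 then 1 else a.+1.
Definition dd n a := (n - 1) - rr n a.

Lemma is_walk_cons2 m n L i j x y s :
  is_walk m n L.+1 i j (x :: y :: s) =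
  [&& x == i, inV m n x, dw_edge m n x y & is_walk m n L y j (y :: s)].
Proof.
rewrite /is_walk /= eqxx eqSS.
by case: (size s == L); case: (x == i); case: (inV m n x); case: (inV m n y);
   case: (dw_edge m n x y); rewrite /= ?andbF.
Qed.

Lemma W_S m n j L i : Wc m n j L.+1 i =
  \sum_(y : 'I_(m*(n-1)+2)) (inV m n i && dw_edge m n i y) * Wc m n j L y.
Proof.
rewrite /Wc big_tuple_split; apply: eq_bigr => y _.
rewrite big_distrr /=; apply: eq_bigr => t _.
rewrite /= !eqxx !eqSS /=.
by case: (inV m n i); case: (dw_edge m n i y); rewrite /= ?andbF ?mul1n ?andbT.
Qed.

Lemma W0 m n j i : Wc m n j 0 i = inV m n i && (i == j).
Proof. by rewrite /Wc big_tuple0 /is_walk /= eqxx !andbT. Qed.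

Lemma pick_sum N c (F : nat -> nat) : c < N ->
  \sum_(y : 'I_N) (val y == c) * F (val y) = F c.
Proof.
move=> hc; rewrite (bigD1 (Ordinal hc)) //= eqxx mul1n big1 ?addn0 // => y hy.
have: val y != c by apply: contra hy => /eqP h; apply/eqP/val_inj.
by move=> /negbTE ->.
Qed.

Lemma exists_sum (T : finType) (P : pred T) :
  (forall x y, P x -> P y -> x = y) -> ([exists x, P x] : nat) = \sum_x P x.
Proof.
move=> H; case: (pickP P) => [x Px | P0].
  have -> : [exists x, P x] = true by apply/existsP; exists x.
  rewrite (bigD1 x) //= Px big1 // => y hyx.
  case Py: (P y) => //; move: hyx; by rewrite (H _ _ Py Px) eqxx.
have -> : [exists x, P x] = false by apply/existsP => -[x]; rewrite P0.
by rewrite big1 // => y _; rewrite P0.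
Qed.

Lemma modsmall_mul k d x : x < d -> (k * d + x) %% d = x.
Proof. by move=> h; rewrite modnMDl modn_small. Qed.

Lemma uniq_dec n a k x : 2 < n -> x < n - 1 -> a - 2 = k * (n - 1) + x ->
  x = rr n a /\ k = (a - 2) %/ (n - 1).
Proof.
move=> hn hx h; rewrite /rr h modsmall_mul //; split => //.
rewrite divnMDl ?divn_small ?addn0 //; nia.
Qed.

Lemma edge_1 m n b : 2 < n -> dw_edge m n 1 b = [exists k : 'I_m, b == k*(n-1)+2].
Proof.
move=> hn; rewrite /dw_edge.
have -> : [exists k : 'I_m, exists i : 'I_n, [&& 2 <= i, i <= n - 1, 1 == k * (n - 1) + i & b == k * (n - 1) + i + 1]] = false.
  apply/existsP => -[k /existsP [i /and4P [h2 _ /eqP h _]]]; nia.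
have -> : [exists k : 'I_m, (1 == k * (n - 1) + n) && (b == 1)] = false.
  apply/existsP => -[k /andP [/eqP h _]]; nia.
by rewrite !orbF; apply: eq_existsb => k; rewrite eqxx.
Qed.

Lemma decomp m n a : 2 < n -> inV m n a -> a != 1 ->
  exists2 q, a - 2 = q * (n - 1) + rr n a & q < m.
Proof.
move=> hn /andP [ha1 ha2] ha; exists ((a - 2) %/ (n - 1)).
  by rewrite /rr -divn_eq.
rewrite ltn_divLR; [|nia].
have : a != 1 by []. move: ha2; nia.
Qed.

Lemma rr_lt n a : 2 < n -> rr n a < n - 1.
Proof. move=> hn; rewrite /rr ltn_mod; nia. Qed.

Lemma edge_other m n a b : 2 < n -> inV m n a -> a != 1 ->
  dw_edge m n a b = (b == succ n a).
Proof.
move=> hn hV ha.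
have [q hdiv hq] := @decomp m n a hn hV ha.
have hr := rr_lt n a hn.
move: hV => /andP [ha1 ha2].
rewrite /dw_edge.
have -> : [exists k : 'I_m, (a == 1) && (b == k * (n - 1) + 2)] = false.
  by apply/existsP => -[k /andP [/eqP h _]]; move: ha; rewrite h.
rewrite /= /succ.
case: (eqVneq (rr n a) (n - 2)) => hrn /=.
- have -> : [exists k : 'I_m, exists i : 'I_n, [&& 2 <= i, i <= n - 1, a == k * (n - 1) + i & b == k * (n - 1) + i + 1]] = false.
    apply/existsP => -[k /existsP [i /and4P [h2 h3 /eqP h _]]].
    have hx : i - 2 < n - 1 by nia.
    have hh : a - 2 = k * (n - 1) + (i - 2) by nia.
    have [hx2 _] := @uniq_dec n a k (i - 2) hn hx hh; nia.
  rewrite orFb; apply/existsP/idP.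
    by case=> k /andP [_ ->].
  move=> hb; exists (Ordinal hq); rewrite hb andbT; apply/eqP => /=; nia.
- have -> : [exists k : 'I_m, (a == k * (n - 1) + n) && (b == 1)] = false.
    apply/existsP => -[k /andP [/eqP h _]].
    have hx : n - 2 < n - 1 by nia.
    have hh : a - 2 = k * (n - 1) + (n - 2) by nia.
    have [hx2 _] := @uniq_dec n a k (n - 2) hn hx hh; nia.
  rewrite orbF; apply/existsP/idP.
    case=> k /existsP [i /and4P [h2 h3 /eqP h /eqP hb]]; apply/eqP; nia.
  move=> /eqP hb; exists (Ordinal hq); apply/existsP.
  have hi : rr n a + 2 < n by nia.
  exists (Ordinal hi); rewrite /=; apply/and4P; split; [nia | nia | apply/eqP; nia | apply/eqP; nia].
Qed.

Lemma inV1 m n : inV m n 1.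
Proof. rewrite /inV; apply/andP; split; nia. Qed.

Lemma step m n a : 2 < n -> inV m n a -> a != 1 -> 1 < dd n a ->
  [/\ succ n a = a.+1, inV m n a.+1, a.+1 != 1 & dd n a.+1 = (dd n a).-1].
Proof.
move=> hn hV ha hd.
have [q hdiv hq] := @decomp m n a hn hV ha.
have hr := rr_lt n a hn.
move: (hV) => /andP [ha1 ha2].
have hrn : rr n a != n - 2 by move: hd; rewrite /dd; nia.
have hx : rr n a + 1 < n - 1 by nia.
have hh : a.+1 - 2 = q * (n - 1) + (rr n a + 1) by nia.
have [hx2 _] := @uniq_dec n a.+1 q _ hn hx hh.
split.
- by rewrite /succ (negbTE hrn).
- apply/andP; split; nia.
- by apply/negP => /eqP; nia.
- rewrite /dd -hx2; nia.
Qed.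

Lemma step_last n a : 2 < n -> dd n a = 1 -> succ n a = 1.
Proof.
move=> hn hd; have hr := rr_lt n a hn.
by rewrite /succ (_ : rr n a == n - 2) //; apply/eqP; move: hd; rewrite /dd; nia.
Qed.

Lemma dd_pos n a : 2 < n -> 0 < dd n a.
Proof. move=> hn; have := rr_lt n a hn; rewrite /dd; nia. Qed.

Lemma succ_inV m n a : 2 < n -> inV m n a -> a != 1 -> inV m n (succ n a).
Proof.
move=> hn hV ha; have := dd_pos n a hn.
case: (ltnP 1 (dd n a)) => hd _.
  by have [-> ? _ _] := @step m n a hn hV ha hd.
rewrite step_last //; [exact: inV1 | move: hd; have := dd_pos n a hn; nia].
Qed.

Lemma inV_lt m n c : inV m n c -> c < m * (n - 1) + 2.
Proof. move=> /andP [_ h]; nia. Qed.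

Lemma W_other m n j L a : 2 < n -> inV m n a -> a != 1 ->
  Wc m n j L.+1 a = Wc m n j L (succ n a).
Proof.
move=> hn hV ha; rewrite W_S.
under eq_bigr => y _ do rewrite hV edge_other //=.
by apply: pick_sum; apply: inV_lt; apply: succ_inV.
Qed.

Lemma K1 m n j t : 2 < n -> forall L a, inV m n a -> a != 1 -> dd n a = t.+1 ->
  Wc m n j (L + t.+1) a = Wc m n j L 1.
Proof.
move=> hn; elim: t => [|t IH] L a hV ha hd.
  by rewrite addn1 W_other // step_last.
have hd1 : 1 < dd n a by rewrite hd.
have [hs hV' ha' hd'] := @step m n a hn hV ha hd1.
by rewrite addnS W_other // hs IH // hd'  hd.
Qed.

Lemma K2 m n j L : 2 < n ->
  Wc m n j L.+1 1 = \sum_(k < m) Wc m n j L (k * (n - 1) + 2).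
Proof.
move=> hn; rewrite W_S.
transitivity (\sum_(y : 'I_(m * (n - 1) + 2)) \sum_(k < m)
                 (val y == k * (n - 1) + 2) * Wc m n j L y).
  apply: eq_bigr => y _; rewrite inV1 edge_1 //= exists_sum; first by rewrite big_distrl.
  move=> k1 k2 /eqP h1 /eqP h2; apply/val_inj/eqP.
  have e : nat_of_ord k1 * (n - 1) = nat_of_ord k2 * (n - 1) by nia.
  by rewrite -(eqn_pmul2r (_ : 0 < n - 1)) ?e //; nia.
rewrite exchange_big /=; apply: eq_bigr => k _.
apply: (@pick_sum _ _ (Wc m n j L)).
have := ltn_ord k; nia.
Qed.

Lemma fk_props m n (k : 'I_m) : 2 < n ->
  [/\ inV m n (k * (n - 1) + 2), k * (n - 1) + 2 != 1 & dd n (k * (n - 1) + 2) = n - 1].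
Proof.
move=> hn; split.
- rewrite /inV; apply/andP; split; have := ltn_ord k; nia.
- by rewrite addn2.
- by rewrite /dd /rr addnK modnMl subn0.
Qed.

Lemma K3 m n j L : 2 < n -> Wc m n j (L + n) 1 = m * Wc m n j L 1.
Proof.
move=> hn; rewrite (_ : L + n = (L + (n - 2).+1).+1); last by nia.
rewrite K2 //.
rewrite (eq_bigr (fun _ => Wc m n j L 1)).
  by rewrite sum_nat_const card_ord.
move=> k _; have [h1 h2 h3] := @fk_props m n k hn.
by apply: K1 => //; rewrite h3; nia.
Qed.

Lemma K4 m n j q r : 2 < n -> Wc m n j (q * n + r) 1 = m ^ q * Wc m n j r 1.
Proof.
move=> hn; elim: q => [|q IH]; first by rewrite mul0n add0n expn0 mul1n.
by rewrite mulSn (addnC n) -addnA (addnC _ r) addnA K3 // IH expnS mulnA.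
Qed.

Lemma Kgen m n j L a : 2 < n -> inV m n a -> a != 1 ->
  Wc m n j (L + dd n a) a = Wc m n j L 1.
Proof.
move=> hn hV ha; have := dd_pos n a hn.
case hd: (dd n a) => [|t] // _; exact: K1.
Qed.

Lemma sub_decomp n p t : 1 < p -> t <= n - 1 -> 0 < n ->
  p * n - 1 = ((p - 1) * n + (n - 1 - t)) + t.
Proof. by case: p => // p _ ht hn; rewrite subn1 /= mulSn; nia. Qed.

Lemma LemA m n j p i : 2 < n -> 1 < p -> inV m n i ->
  Wc m n j (p * n - 1) i = m ^ (p - 1) * Wc m n j (n - 1) i.
Proof.
move=> hn hp hi; case: (eqVneq i 1) => [-> | ha].
  by rewrite (@sub_decomp n p 0) ?subn0 ?addn0 // ?K4 //; nia.
have hd : dd n i <= n - 1 by rewrite /dd leq_subr.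
have e2 : Wc m n j (n - 1) i = Wc m n j (n - 1 - dd n i) 1.
  by rewrite -{1}(subnK hd) Kgen.
by rewrite e2 (@sub_decomp n p (dd n i)) // ?Kgen ?K4 //; nia.
Qed.

Lemma B1 m n j r : 2 < n -> forall a, inV m n a -> a != 1 -> r < dd n a ->
  Wc m n j r a = (a + r == j).
Proof.
move=> hn; elim: r => [|r IH] a hV ha hr.
  by rewrite W0 hV addn0.
have hd1 : 1 < dd n a by nia.
have [hs hV' ha' hd'] := @step m n a hn hV ha hd1.
by rewrite W_other // hs IH // ?addSnnS // hd'; nia.
Qed.

Lemma B2 m n j r : 2 < n -> r <= n - 1 -> Wc m n j r 1 <= 1.
Proof.
move=> hn; case: r => [|r] hr.
  by rewrite W0; case: (_ && _).
rewrite K2 // (eq_bigr (fun k : 'I_m => (k * (n - 1) + 2 + r == j) : nat)).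
  rewrite -exists_sum ?leq_b1 //.
  move=> k1 k2 /eqP h1 /eqP h2; apply/val_inj/eqP.
  have e : nat_of_ord k1 * (n - 1) = nat_of_ord k2 * (n - 1) by nia.
  by rewrite -(eqn_pmul2r (_ : 0 < n - 1)) ?e //; nia.
move=> k _; have [h1 h2 h3] := @fk_props m n k hn.
by apply: B1 => //; rewrite h3; nia.
Qed.

Lemma B m n j i : 2 < n -> inV m n i -> Wc m n j (n - 1) i <= 1.
Proof.
move=> hn hi; case: (eqVneq i 1) => [-> | ha]; first exact: B2.
have hd : dd n i <= n - 1 by rewrite /dd leq_subr.
rewrite -{1}(subnK hd) Kgen //; apply: B2 => //; exact: leq_subr.
Qed.

Lemma is_walk_head m n L i j x s :
  is_walk m n L i j (x :: s) = (x == i) && is_walk m n L i j (i :: s).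
Proof.
by case: (eqVneq x i) => [-> | ne]; rewrite /is_walk ?eqxx ?(negbTE ne) ?andbF.
Qed.

Lemma nw_W m n j L i : inV m n i -> nwalks m n L i j = Wc m n j L i.
Proof.
move=> hi; rewrite /nwalks -sum1_card big_mkcond /=.
transitivity (\sum_(t : (L.+1).-tuple 'I_(m * (n - 1) + 2)) (is_walk m n L i j (map val t) : nat)).
  by apply: eq_bigr => t _; rewrite inE; case: (is_walk _ _ _ _ _ _).
rewrite big_tuple_split.
rewrite (eq_bigr (fun y : 'I_(m * (n - 1) + 2) => (val y == i) * Wc m n j L i)).
  by apply: (@pick_sum _ _ (fun _ => Wc m n j L i)); apply: inV_lt.
move=> y _; rewrite /Wc big_distrr; apply: eq_bigr => t _.
by rewrite [map _ _]/= is_walk_head -mulnb.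
Qed.

Lemma ex_walk m n L i j : inV m n i ->
  (exists s, is_walk m n L i j s) <-> 0 < nwalks m n L i j.
Proof.
move=> hi; split.
- case=> s hs.
  have hN := @inV_lt m n i hi; pose x0 := Ordinal hN.
  have [hsz0 hall] : size s = L.+1 /\ all (fun x => x < m * (n - 1) + 2) s.
    case: s hs => // x t /and5P [/eqP -> ha _ _ _]; split => //.
    by apply: sub_all ha => y /inV_lt.
  have hsz : size (map (insubd x0) s) == L.+1 by rewrite size_map hsz0.
  have hmap : map val (map (insubd x0) s) = s.
    rewrite -map_comp -[RHS]map_id; apply/eq_in_map => y hy /=.
    by rewrite insubdK //; exact: (allP hall).
  rewrite /nwalks card_gt0; apply/set0Pn; exists (Tuple hsz); rewrite inE /= hmap //.
- rewrite /nwalks card_gt0 => /set0Pn [t]; rewrite inE => ht; by exists (map val t).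
Qed.

Theorem lemma2p6 (m n p i j : nat) :
  1 <= m -> 3 <= n -> 2 <= p -> inV m n i -> inV m n j ->
  ((exists s : seq nat, is_walk m n (p * n - 1) i j s) <->
   (exists s : seq nat, is_walk m n (n - 1) i j s)) /\
  ((exists s : seq nat, is_walk m n (n - 1) i j s) ->
   nwalks m n (p * n - 1) i j = m ^ (p - 1)).
Proof.
move=> hm hn hp hi hj.
have hW := @LemA m n j p i hn hp hi.
have hB := @B m n j i hn hi.
have E L : (exists s, is_walk m n L i j s) <-> 0 < Wc m n j L i.
  by rewrite -nw_W //; exact: ex_walk.
split; first split.
- move=> /E; rewrite hW muln_gt0 => /andP [_ h]; exact/E.
- move=> /E h; apply/E; by rewrite hW muln_gt0 expn_gt0 hm h.
- move=> /E h; rewrite nw_W // hW.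
  have -> : Wc m n j (n - 1) i = 1 by apply/eqP; rewrite eqn_leq hB h.
  by rewrite muln1.
Qed.
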